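(* Let $m\ge 2$, let $n_1,\dots,n_m\ge 4$ be even, and let $\mathcal{C}=\mathcal{C}(C_{n_1},\dots,C_{n_m})$ be the even chain cycle. Let $V_1=\{v^2_1,\dots,v^m_1\}$ and $V_2=V(\mathcal{C})\setminus V_1$ (so each vertex of $V_2$ has a unique name $v^i_j$ and lies in exactly one cycle $C_{n_i}$). Let $v^i_j,v^k_l\in V_2$ be distinct. (a) If $i=k$, then $v^i_j$ and $v^i_l$ are mutually maximally distant in $\mathcal{C}$ if and only if $d(v^i_j,v^i_l)=n_i/2$ (the diameter of $C_{n_i}$). (b) If $i\neq k$, then $v^i_j$ and $v^k_l$ are mutually maximally distant in $\mathcal{C}$ if and only if $d(v^i_j,v^k_l)$ equals the diameter of $\mathcal{C}$.
   Context: Let $C_{n_1},\dots,C_{n_m}$ be pairwise disjoint cycles, $V(C_{n_i})=\{v^i_1,\dots,v^i_{n_i}\}$ with $v^i_j$ adjacent to $v^i_{j+1}$ (indices mod $n_i$). The even chain cycle $\mathcal{C}(C_{n_1},\dots,C_{n_m})$ (all $n_i$ even) is obtained by identifying $v^i_{n_i/2+1}$ with $v^{i+1}_1$ for each $i=1,\dots,m-1$; the identified vertex carries both names. A vertex $u$ is maximally distant from $v$ if every neighbor $w$ of $u$ satisfies $d(v,w)\le d(u,v)$; $u,v$ are mutually maximally distant if each is maximally distant from the other. *)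

(* Defs.v *)
From mathcomp Require Import all_boot.
Set Implicit Arguments. Unset Strict Implicit. Unset Printing Implicit Defensive.

(* Even chain cycle C(C_{n_1},...,C_{n_m}).  0-based indexing:
   cycle i : 'I_m has vertices named (i, j) with j : 'I_(n i),
   paper's v^{i+1}_{j+1} = our name (i, j).
   Identification: name (i, n i ./2) (= v^{i+1}_{n_{i+1}/2+1}) is identified
   with name (i+1, 0) (= v^{i+2}_1). *)
Section ChainCycle.
Variables (m : nat) (n : 'I_m -> nat).

Definition cname := {i : 'I_m & 'I_(n i)}.

Definition cyc_adj (a b : cname) : bool :=
  (tag a == tag b) &&
  (((tagged a).+1 %% n (tag a) == tagged b) ||
   ((tagged b).+1 %% n (tag b) == tagged a)).

Definition ident (a b : cname) : bool :=
  [&& (tag b == (tag a).+1 :> nat), (tagged a == (n (tag a))./2 :> nat)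
    & (tagged b == 0 :> nat)].

Definition same (a b : cname) : bool := [|| a == b, ident a b | ident b a].

(* vertices: each vertex is represented by one name; the names v^{i+1}_1
   (i >= 1) are dropped, the vertex being represented by v^i_{n_i/2+1}. *)
Definition cvert := {x : cname | ~~ ((0 < tag x) && (tagged x == 0 :> nat))}.

Definition cadj (u w : cvert) : bool :=
  [exists a : cname, exists b : cname,
     [&& same (val u) a, same (val w) b & cyc_adj a b]].

(* graph distance: length of a shortest walk (#|cvert| if none exists) *)
Definition cdist (u w : cvert) : nat :=
  find (fun k => [exists p : k.-tuple cvert, path cadj u p && (last u p == w)])
       (iota 0 #|{: cvert}|).

Definition cdiam : nat := \max_(u : cvert) \max_(w : cvert) cdist u w.

Definition max_distant (u v : cvert) : Prop :=
  forall w : cvert, cadj u w -> cdist v w <= cdist u v.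

Definition mutually_max_distant (u v : cvert) : Prop :=
  max_distant u v /\ max_distant v u.

Definition inV1 (u : cvert) : bool :=
  [exists a : cname, [&& same (val u) a, 0 < tag a & (tagged a == 0 :> nat)]].

End ChainCycle.

(* Main.v *)
Require Import Defs.
From mathcomp Require Import all_boot zify.
Set Implicit Arguments. Unset Strict Implicit. Unset Printing Implicit Defensive.

Definition ad (a b : nat) := (a - b) + (b - a).
Definition cd N j l := minn (ad j l) (N - ad j l).
Definition up N l := if l.+1 == N then 0 else l.+1.
Definition dn N l := if l == 0 then N.-1 else l.-1.
Lemma adl j l : j <= l -> ad j l = l - j. Proof. rewrite /ad; lia. Qed.
Lemma adr j l : l <= j -> ad j l = j - l. Proof. rewrite /ad; lia. Qed.
Ltac adcase j l := let H := fresh in case: (leqP j l) => H; [rewrite (adl H) | rewrite (adr (ltnW H))].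
Ltac ads := repeat match goal with |- context [ad ?a ?b] => adcase a b end.
Lemma cd_down N j l : j < N -> l < N -> 0 < cd N j l ->
  cd N j (up N l) + 1 = cd N j l \/ cd N j (dn N l) + 1 = cd N j l.
Proof.
case: N => [//|N]; case: l => [|l] jN lN; rewrite /cd /up /dn /=; case: eqP => e1.
- (ads; lia).
- (ads; lia).
- (ads; lia).
- (ads; lia).
Qed.
Lemma cd_up N H j l : N = 2 * H -> j < N -> l < N -> cd N j l < H ->
  cd N j (up N l) = cd N j l + 1 \/ cd N j (dn N l) = cd N j l + 1.
Proof.
move=> NH; case: N NH => [//|N] NH; case: l => [|l] jN lN; rewrite /cd /up /dn /=; case: eqP => e1; (ads; lia).
Qed.
Definition am N l := minn l (N - l).
Lemma am_down N l : 0 < l -> l < N ->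
  am N (up N l) + 1 = am N l \/ am N (dn N l) + 1 = am N l.
Proof. move=> l0 lN; rewrite /am /up /dn; case: eqP; case: eqP; try lia. Qed.
Lemma am_up N H l : N = 2 * H -> l < N -> am N l < H ->
  am N (up N l) = am N l + 1 \/ am N (dn N l) = am N l + 1.
Proof. move=> NH lN; rewrite /am /up /dn; case: eqP; case: eqP; try lia. Qed.

Lemma big2 (T : finType) (F : T -> T -> nat) x y : F x y <= \max_u \max_w F u w.
Proof. apply: leq_trans (leq_bigmax x); exact: (leq_bigmax (F := F x)). Qed.
Lemma big2le (T : finType) (F : T -> T -> nat) b : (forall x y, F x y <= b) -> \max_u \max_w F u w <= b.
Proof. move=> H; apply/bigmax_leqP => x _; apply/bigmax_leqP => y _; exact: H. Qed.

Section S.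
Variables (m : nat) (n : 'I_m -> nat).
Hypothesis hn4 : forall i, 4 <= n i.
Hypothesis hnev : forall i, ~~ odd (n i).

Definition h (i : 'I_m) := (n i)./2.
Lemma nE i : n i = 2 * h i.
Proof. have := odd_double_half (n i); rewrite (negbTE (hnev i)) add0n -mul2n /h; lia. Qed.

Definition tg (c : cname n) : 'I_m := tag c.
Definition tj (c : cname n) : nat := tagged c.
Lemma tj_lt c : tj c < n (tg c). Proof. exact: ltn_ord. Qed.

Definition aa c := minn (tj c) (n (tg c) - tj c).
Definition hn (t : nat) := oapp h 0 (insub t).
Definition D k := \sum_(0 <= t < k) hn t.
Definition X c := D (tg c) + aa c.
Definition adiff a b := (a - b) + (b - a).
Definition cycd (i : 'I_m) j l := minn (adiff j l) (n i - adiff j l).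
Definition g (s c : cname n) :=
  if tg s == tg c then cycd (tg c) (tj s) (tj c) else adiff (X s) (X c).

Lemma hnE (i : 'I_m) : hn i = h i.
Proof. by rewrite /hn valK. Qed.

Lemma DS k : D k.+1 = D k + hn k.
Proof. by rewrite /D big_nat_recr. Qed.

Lemma D_mono i k : i <= k -> D i <= D k.
Proof.
move=> le; rewrite -(subnKC le); elim: (k - i) => [|d IH]; first by rewrite addn0.
by rewrite addnS DS; lia.
Qed.

Lemma DSo (i : 'I_m) : D i.+1 = D i + h i.
Proof. by rewrite DS hnE. Qed.

Lemma g_ident (s a b : cname n) : ident a b -> g s a = g s b.
Proof.
move/and3P=> [/eqP tb /eqP ta /eqP t0].
have {}tb : (tg b : nat) = (tg a).+1 by [].
have {}ta : tj a = h (tg a) by [].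
have {}t0 : tj b = 0 by [].
have Dab : D (tg b) = D (tg a) + h (tg a) by rewrite tb DSo.
have aaa : aa a = h (tg a) by rewrite /aa ta nE; lia.
have aab : aa b = 0 by rewrite /aa t0 min0n.
have Xab : X a = X b by rewrite /X Dab aaa aab addn0.
have nab : tg a != tg b by apply/eqP => E; move: tb; rewrite -E; lia.
have ls := tj_lt s.
rewrite /g; case: eqP => Ea; case: eqP => Eb.
- by move: nab; rewrite -Ea -Eb eqxx.
- rewrite /X Dab aab /cycd /aa /adiff ta -Ea; rewrite Ea nE in ls *; lia.
- have Dsb : D (tg s) = D (tg a) + h (tg a) by rewrite Eb.
  rewrite /X Dsb aaa /cycd /aa /adiff t0 -Eb; rewrite Eb nE in ls *; lia.
- by rewrite Xab.
Qed.

Lemma modS j k : j < k -> j.+1 %% k = if j.+1 == k then 0 else j.+1.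
Proof. move=> lt; case: eqP => [->|ne]; first by rewrite modnn. by rewrite modn_small //; lia. Qed.

Lemma adj_arith (N j l : nat) : l < N -> j < N -> (j.+1 %% N == l) || (l.+1 %% N == j) ->
  (j.+1 = l \/ (j.+1 = N /\ l = 0)) \/ (l.+1 = j \/ (l.+1 = N /\ j = 0)).
Proof.
move=> lN jN /orP [] /eqP; rewrite modS //; case: eqP => e <-; lia.
Qed.

Lemma cyc_adjP (a b : cname n) : cyc_adj a b ->
  tg a = tg b /\ (((tj a).+1 = tj b \/ ((tj a).+1 = n (tg a) /\ tj b = 0)) \/
                 ((tj b).+1 = tj a \/ ((tj b).+1 = n (tg a) /\ tj a = 0))).
Proof.
case/andP=> /eqP E H; have E' : tg a = tg b by [].
split=> //; apply: adj_arith; [rewrite E'; exact: tj_lt| exact: tj_lt|].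
have H' : ((tj a).+1 %% n (tg a) == tj b) || ((tj b).+1 %% n (tg b) == tj a) by [].
by rewrite -E' in H'.
Qed.

Lemma cyc_adj_sym (a b : cname n) : cyc_adj a b = cyc_adj b a.
Proof. by rewrite /cyc_adj eq_sym orbC. Qed.

Lemma g_same (s a b : cname n) : same a b -> g s a = g s b.
Proof.
case/or3P=> [/eqP -> //| /g_ident -> // | /g_ident -> //].
Qed.

Lemma g_self s : g s s = 0.
Proof. by rewrite /g eqxx /cycd /adiff subnn minnE. Qed.

Lemma g_sym s c : g s c = g c s.
Proof.
rewrite /g eq_sym; case: eqP => E; last by rewrite /adiff addnC.
by rewrite /cycd E /adiff addnC.
Qed.

Lemma aa_le c : aa c <= h (tg c).
Proof. have := tj_lt c; rewrite /aa nE; lia. Qed.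

Lemma cycd_le (i : 'I_m) j l : cycd i j l <= h i.
Proof. rewrite /cycd nE; lia. Qed.

Lemma X_bound c : X c <= D m.
Proof.
rewrite /X; have := aa_le c; have := D_mono (ltn_ord (tg c)); rewrite DSo; lia.
Qed.

Lemma X_le (a b : cname n) : (tg a : nat) < tg b -> X a <= X b.
Proof.
move=> lt; rewrite /X; have := aa_le a; have := D_mono lt; rewrite DSo; lia.
Qed.

Lemma g_lip s (a b : cname n) : cyc_adj a b -> g s b <= g s a + 1.
Proof.
case/cyc_adjP => E H; have la := tj_lt a; have lb := tj_lt b; rewrite -E in lb.
rewrite /g -E; case: eqP => Es.
- have ls := tj_lt s; rewrite Es in ls; rewrite /cycd /adiff.
  rewrite nE in la lb ls H *; lia.
- rewrite /X /aa -E /adiff; rewrite nE in la lb H *; lia.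
Qed.

Lemma name_eq (a b : cname n) : tg a = tg b -> tj a = tj b -> a = b.
Proof.
move: a b => [i j] [k l]; rewrite /tg /tj /= => E; case: k / E l => l E.
by congr existT; apply: val_inj.
Qed.

Lemma cv_ok (w : cvert n) : (tg (val w) : nat) = 0 \/ tj (val w) <> 0.
Proof.
have V : ~~ ((0 < tg (val w)) && (tj (val w) == 0)) := valP w.
case: (posnP (tg (val w))) V => [-> | _ /= /eqP]; by [left | right].
Qed.

Lemma aa0 c : aa c = 0 -> tj c = 0.
Proof. have := tj_lt c; rewrite /aa; lia. Qed.

Lemma X_lt (u w : cvert n) : (tg (val u) : nat) < tg (val w) -> X (val u) < X (val w).
Proof.
move=> lt; have := aa_le (val u); have := D_mono lt; rewrite DSo /X => H1 H2.
case: (cv_ok w) => [E|]; first by move: lt; rewrite E.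
move=> ne; suff : 0 < aa (val w) by lia.
by rewrite lt0n; apply/eqP => /aa0.
Qed.

Lemma g0 (u w : cvert n) : g (val u) (val w) = 0 -> u = w.
Proof.
rewrite /g; case: eqP => E.
- have := tj_lt (val w); have := tj_lt (val u); rewrite E /cycd /adiff => l1 l2 H.
  apply: val_inj; apply: name_eq => //; lia.
- rewrite /adiff => H; exfalso.
  case: (ltngtP (tg (val u)) (tg (val w))) => [lt|lt|eq].
  + have := X_lt lt; lia.
  + have := X_lt lt; lia.
  + by apply: E; apply: val_inj.
Qed.

Lemma g_adj s (x y : cvert n) : cadj x y -> g s (val y) <= g s (val x) + 1.
Proof.
case/existsP=> a /existsP [b /and3P [Sa Sb Cab]].
by rewrite (g_same s Sa) (g_same s Sb); apply: g_lip.
Qed.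

Definition gv (s : cname n) (z : cvert n) := g s (val z).
Arguments gv : simpl never.

Lemma g_path (s : cname n) (x : cvert n) p : path (@cadj m n) x p ->
  gv s (last x p) <= gv s x + size p.
Proof.
elim: p x => [|y p IH] x /=; first by rewrite addn0.
case/andP=> Hxy /IH; have := g_adj s Hxy; rewrite -/(gv s y) -/(gv s x); lia.
Qed.

Lemma rep_ex (c : cname n) : exists x : cvert n, same (val x) c.
Proof.
case: (boolP ((0 < tg c) && (tj c == 0))) => [/andP [pos /eqP z]|ok].
- have lt : (tg c).-1 < m by have := ltn_ord (tg c); lia.
  pose i := Ordinal lt.
  have hl : h i < n i by rewrite nE; have := hn4 i; rewrite nE; lia.
  pose a : cname n := existT _ i (Ordinal hl).
  have ok : ~~ ((0 < tag a) && (tagged a == 0 :> nat)).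
    rewrite /=; apply/negP => /andP [_ /eqP]; have := hn4 i; rewrite nE /h; lia.
  exists (exist _ a ok); apply/or3P; constructor 2; apply/and3P; split => //=.
  + by apply/eqP; rewrite -/(tg c); lia.
  + by apply/eqP.
- by exists (exist _ c ok); rewrite /same eqxx.
Qed.

Lemma n_pos i : 0 < n i. Proof. by have := hn4 i; lia. Qed.

Lemma up_lt (t : cname n) : up (n (tg t)) (tj t) < n (tg t).
Proof. have := tj_lt t; have := n_pos (tg t); rewrite /up; case: eqP; lia. Qed.
Lemma dn_lt (t : cname n) : dn (n (tg t)) (tj t) < n (tg t).
Proof. have := tj_lt t; have := n_pos (tg t); rewrite /dn; case: eqP; lia. Qed.

Definition nbp (t : cname n) : cname n := existT _ (tg t) (Ordinal (up_lt t)).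
Definition nbm (t : cname n) : cname n := existT _ (tg t) (Ordinal (dn_lt t)).

Lemma tj_nbp t : tj (nbp t) = up (n (tg t)) (tj t). Proof. by []. Qed.
Lemma tj_nbm t : tj (nbm t) = dn (n (tg t)) (tj t). Proof. by []. Qed.

Lemma nbp_adj t : cyc_adj (nbp t) t.
Proof.
apply/andP; split; first by [].
apply/orP; right; apply/eqP.
have : (tj t).+1 %% n (tg t) = up (n (tg t)) (tj t) by rewrite modS ?tj_lt.
by [].
Qed.

Lemma nbm_adj t : cyc_adj (nbm t) t.
Proof.
apply/andP; split; first by [].
apply/orP; left; apply/eqP.
have : (dn (n (tg t)) (tj t)).+1 %% n (tg t) = tj t.
  have := tj_lt t; have := n_pos (tg t); rewrite modS ?dn_lt // /dn.
  case: (tj t =P 0) => E; case: eqP; lia.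
by [].
Qed.

Lemma cycdE i j l : cycd i j l = cd (n i) j l. Proof. by []. Qed.
Lemma aaE c : aa c = am (n (tg c)) (tj c). Proof. by []. Qed.

Lemma g_eq (s c : cname n) : tg s = tg c -> g s c = cd (n (tg c)) (tj s) (tj c).
Proof. by move=> E; rewrite /g E eqxx. Qed.
Lemma g_ne (s c : cname n) : tg s != tg c -> g s c = adiff (X s) (X c).
Proof. by move=> E; rewrite /g (negbTE E). Qed.

Lemma desc_same (s t : cname n) : tg t = tg s -> 0 < g s t ->
  exists c, cyc_adj c t /\ g s c + 1 = g s t.
Proof.
move=> E; rewrite g_eq; last exact: esym E.
move=> H; have js := tj_lt s; rewrite -E in js.
case: (cd_down js (tj_lt t) H) => H'.
- by exists (nbp t); split; [exact: nbp_adj| rewrite g_eq //; exact: (esym E)].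
- by exists (nbm t); split; [exact: nbm_adj| rewrite g_eq //; exact: (esym E)].
Qed.

Lemma desc_up (s t : cname n) : tg t != tg s -> X s < X t -> 0 < tj t ->
  exists c, cyc_adj c t /\ g s c + 1 = g s t.
Proof.
move=> E lt l0; have Es : tg s != tg t by rewrite eq_sym.
case: (am_down l0 (tj_lt t)) => H.
- exists (nbp t); split; first exact: nbp_adj.
  rewrite !g_ne //; move: lt H; rewrite /X /adiff !aaE /= ?tj_nbp ?tj_nbm; lia.
- exists (nbm t); split; first exact: nbm_adj.
  rewrite !g_ne //; move: lt H; rewrite /X /adiff !aaE /= ?tj_nbp ?tj_nbm; lia.
Qed.

Lemma desc_dn (s t : cname n) : tg t != tg s -> X t < X s -> aa t < h (tg t) ->
  exists c, cyc_adj c t /\ g s c + 1 = g s t.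
Proof.
move=> E lt l0; have Es : tg s != tg t by rewrite eq_sym.
rewrite aaE in l0.
case: (am_up (nE _) (tj_lt t) l0) => H.
- exists (nbp t); split; first exact: nbp_adj.
  rewrite !g_ne //; move: lt H; rewrite /X /adiff !aaE /= ?tj_nbp ?tj_nbm; lia.
- exists (nbm t); split; first exact: nbm_adj.
  rewrite !g_ne //; move: lt H; rewrite /X /adiff !aaE /= ?tj_nbp ?tj_nbm; lia.
Qed.

Lemma D0 : D 0 = 0. Proof. by rewrite /D big_geq. Qed.

Lemma name_desc (u w : cvert n) : u != w ->
  exists c b, [/\ same (val w) b, cyc_adj c b & g (val u) c + 1 = g (val u) (val w)].
Proof.
move=> uw; set s := val u; set t := val w.
have gp : 0 < g s t by rewrite lt0n; apply/eqP => /g0 E; rewrite E eqxx in uw.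
have St : same t t by rewrite /same eqxx.
case: (tg t =P tg s) => E.
  by case: (desc_same E gp) => c [C G]; exists c, t.
have E' : tg t != tg s by apply/eqP.
have Xne : g s t = adiff (X s) (X t) by rewrite g_ne // eq_sym.
case: (ltngtP (X s) (X t)) => [lt|lt|eq]; last by move: gp; rewrite Xne /adiff eq subnn.
- have l0 : 0 < tj t.
    case: (posnP (tj t)) => [z|//]; exfalso.
    case: (cv_ok w) => [z'|]; last by rewrite -/t z.
    move: lt; rewrite /X -/t z' D0 /aa z; lia.
  by case: (desc_up E' lt l0) => c [C G]; exists c, t.
- case: (ltnP (aa t) (h (tg t))) => [al|ah].
    by case: (desc_dn E' lt al) => c [C G]; exists c, t.
  have tjh : tj t = h (tg t) by move: ah (tj_lt t); rewrite /aa nE; lia.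
  have lt1 : (tg t).+1 < m.
    case: (ltngtP (tg t).+1 m) => [//| |eq]; first by have := ltn_ord (tg t); lia.
    have := X_bound s; move: lt; rewrite /X (_ : aa t = h (tg t)); last by move: ah; have := aa_le t; lia.
    by rewrite -DSo eq; lia.
  pose k' := Ordinal lt1.
  pose t' : cname n := existT _ k' (Ordinal (n_pos k')).
  have Hid : ident t t' by apply/and3P; split => //; apply/eqP.
  have St' : same t t' by apply/or3P; constructor 2.
  have gst : g s t' = g s t by rewrite (g_ident s Hid).
  case: (k' =P tg s) => Ek.
    case: (@desc_same s t' Ek); first by rewrite gst.
    by move=> c [C G]; exists c, t'; rewrite -gst.
  have Ek' : tg t' != tg s by apply/eqP.
  have Xt : X t' = X t.
    rewrite /X /aa tjh; have -> : tj t' = 0 by [].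
    have -> : D (tg t') = D (tg t) + h (tg t) by rewrite -DSo.
    rewrite (nE (tg t)); lia.
  have al : aa t' < h (tg t') by rewrite /aa; have := hn4 (tg t'); have -> : tj t' = 0 by []; rewrite nE; lia.
  case: (@desc_dn s t' Ek'); [by rewrite Xt | exact: al | ].
  by move=> c [C G]; exists c, t'; rewrite -gst.
Qed.

Lemma descent (u w : cvert n) : u != w ->
  exists x, cadj x w /\ gv (val u) x + 1 = gv (val u) w.
Proof.
case/name_desc => c [b [Sb Cb G]]; case: (rep_ex c) => x Sx.
exists x; split; last by rewrite /gv (g_same _ Sx).
by apply/existsP; exists c; apply/existsP; exists b; rewrite Sx Sb Cb.
Qed.

Lemma gv_self (u : cvert n) : gv (val u) u = 0. Proof. exact: g_self. Qed.

Lemma walk_ex (u : cvert n) d : forall w, gv (val u) w = d ->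
  exists p, [/\ path (@cadj m n) u p, last u p = w, size p = d &
                map (gv (val u)) (u :: p) = iota 0 d.+1].
Proof.
elim: d => [|d IH] w Hw.
  have uw : u = w by apply: g0.
  by exists [::]; rewrite /= -uw gv_self.
have uw : u != w by apply/eqP => E; move: Hw; rewrite -E gv_self.
case: (descent uw) => x [Cx Gx].
case: (IH x) => [|p [Pp Lp Sp Mp]]; first by rewrite Hw in Gx; lia.
exists (rcons p w); split.
- by rewrite rcons_path Pp Lp.
- by rewrite last_rcons.
- by rewrite size_rcons Sp.
- rewrite -rcons_cons map_rcons Mp Hw -cats1 -(iotaD 0 d.+1 1) addn1 //.
Qed.

Lemma find_iota (P : pred nat) k N : k < N -> P k -> (forall j, j < k -> ~~ P j) ->
  find P (iota 0 N) = k.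
Proof.
move=> kN Pk nP; rewrite -(subnKC (ltnW kN)) iotaD find_cat.
have -> : has P (iota 0 k) = false.
  by apply/hasPn => j; rewrite mem_iota add0n => /andP [_ /nP].
rewrite size_iota add0n; have -> : N - k = (N - k).-1.+1 by lia.
by rewrite /= Pk addn0.
Qed.

Lemma bound_iota (T : finType) (f : T -> nat) (s : seq T) d : map f s = iota 0 d -> d <= #|T|.
Proof.
move=> M; have U : uniq s by apply: (map_uniq (f := f)); rewrite M iota_uniq.
by rewrite -(size_iota 0 d) -M size_map -(card_uniqP U); exact: max_card.
Qed.

Lemma cdist_g (u w : cvert n) : cdist u w = g (val u) (val w).
Proof.
rewrite -/(gv (val u) w) /cdist.
case: (walk_ex (erefl (gv (val u) w))) => p [Pp Lp Sp Mp].
match goal with |- find _ (iota 0 ?N) = _ => set NN := N end.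
have C : (gv (val u) w).+1 <= NN := bound_iota Mp.
apply: find_iota => //.
- apply/existsP; exists (Tuple (introT eqP Sp)); by rewrite /= Pp Lp eqxx.
- move=> j lt; apply/negP => /existsP [q /andP [Pq /eqP Lq]].
  have := g_path (val u) Pq; rewrite Lq size_tuple gv_self; lia.
Qed.

Lemma notV1_same (u : cvert n) : ~~ inV1 u -> forall a, same (val u) a -> a = val u.
Proof.
move=> hu a /or3P [/eqP -> //| Hi | Hi]; exfalso.
- apply: (negP hu); apply/existsP; exists a.
  move: (Hi) => /and3P [/eqP tb _ t0]; rewrite /same Hi orbT /= t0 andbT tb //.
- move: Hi => /and3P [/eqP tb _ /eqP t0].
  have V : ~~ ((0 < tg (val u)) && (tj (val u) == 0)) := valP u.
  by move: V; rewrite /tg /tj tb t0 /=.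
Qed.

Lemma V1_right (u : cvert n) : ~~ inV1 u -> tj (val u) = h (tg (val u)) -> (tg (val u)).+1 = m.
Proof.
move=> hu tjh; case: (ltngtP (tg (val u)).+1 m) => [lt| |//]; last by have := ltn_ord (tg (val u)); lia.
exfalso; apply: (negP hu); apply/existsP.
pose k' := Ordinal lt.
pose t' : cname n := existT _ k' (Ordinal (n_pos k')).
exists t'; apply/and3P; split => //.
apply/or3P; constructor 2; apply/and3P; split => //; by apply/eqP.
Qed.

Lemma adj_name (u w : cvert n) : ~~ inV1 u -> cadj u w ->
  exists b, same (val w) b /\ cyc_adj (val u) b.
Proof.
move=> hu /existsP [a /existsP [b /and3P [Sa Sb Cab]]].
by exists b; rewrite -(notV1_same hu Sa).
Qed.

Lemma mk_adj (u : cvert n) b : cyc_adj (val u) b -> exists w, cadj u w /\ same (val w) b.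
Proof.
move=> C; case: (rep_ex b) => w Sw; exists w; split => //.
apply/existsP; exists (val u); apply/existsP; exists b.
by rewrite /same eqxx /= C andbT.
Qed.

Lemma g_le_Dm x y : g x y <= D m.
Proof.
rewrite /g; case: eqP => E.
- have := cycd_le (tg y) (tj x) (tj y); have := D_mono (ltn_ord (tg y)); rewrite DSo; lia.
- have := X_bound x; have := X_bound y; rewrite /adiff; lia.
Qed.

Lemma cdist_sym (u v : cvert n) : cdist u v = cdist v u.
Proof. by rewrite !cdist_g g_sym. Qed.

Lemma aa_h c : aa c = h (tg c) -> tj c = h (tg c).
Proof. have := tj_lt c; rewrite /aa nE; lia. Qed.

Lemma key_lt (u v : cvert n) : (tg (val u) : nat) < tg (val v) -> ~~ inV1 u -> ~~ inV1 v ->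
  max_distant u v -> max_distant v u -> g (val u) (val v) = D m.
Proof.
move=> lt hu hv mu mv.
have ne : tg (val u) != tg (val v) by apply/eqP => E; move: lt; rewrite E ltnn.
have gE : g (val u) (val v) = X (val v) - X (val u).
  by rewrite g_ne // /adiff; have := X_le lt; lia.
have Hu : X (val u) = 0.
  case: (posnP (tj (val u))) => [z|pos].
    case: (cv_ok u) => [z'|]; last by rewrite z.
    by rewrite /X z' D0 /aa z min0n.
  exfalso.
  have Hb : exists b, cyc_adj (val u) b /\ tg b = tg (val u) /\ aa b + 1 = aa (val u).
    case: (am_down pos (tj_lt (val u))) => H.
    + by exists (nbp (val u)); rewrite cyc_adj_sym; split; [exact: nbp_adj| split => //; rewrite aaE].
    + by exists (nbm (val u)); rewrite cyc_adj_sym; split; [exact: nbm_adj| split => //; rewrite aaE].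
  case: Hb => b [Cb [Tb Ab]]; case: (mk_adj Cb) => w [Aw Sw].
  have := mu w Aw; rewrite !cdist_g (g_same _ Sw) g_ne; last by rewrite Tb eq_sym.
  rewrite gE /adiff /X Tb; have := X_le lt; rewrite /X; lia.
have Hv : X (val v) = D m.
  case: (ltnP (aa (val v)) (h (tg (val v)))) => [al|ah].
    exfalso.
    have Hb : exists b, cyc_adj (val v) b /\ tg b = tg (val v) /\ aa b = aa (val v) + 1.
      rewrite aaE in al; case: (am_up (nE _) (tj_lt (val v)) al) => H.
      + by exists (nbp (val v)); rewrite cyc_adj_sym; split; [exact: nbp_adj| split => //; rewrite aaE].
      + by exists (nbm (val v)); rewrite cyc_adj_sym; split; [exact: nbm_adj| split => //; rewrite aaE].
    case: Hb => b [Cb [Tb Ab]]; case: (mk_adj Cb) => w [Aw Sw].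
    have := mv w Aw; rewrite !cdist_g (g_same _ Sw) g_ne; last by rewrite Tb.
    rewrite g_sym gE /adiff /X Tb; have := X_le lt; rewrite /X; lia.
  have aeq : aa (val v) = h (tg (val v)) by have := aa_le (val v); lia.
  have := V1_right hv (aa_h aeq); rewrite /X aeq -DSo => ->; done.
by rewrite gE Hu Hv subn0.
Qed.

Lemma cd_sym N j l : cd N j l = cd N l j. Proof. by rewrite /cd /ad addnC. Qed.

Lemma md_same (u v : cvert n) : ~~ inV1 u -> tg (val u) = tg (val v) ->
  cdist u v = h (tg (val u)) -> max_distant u v.
Proof.
move=> hu E H w Aw; case: (adj_name hu Aw) => b [Sw Cb].
case: (cyc_adjP Cb) => Tb _.
rewrite H cdist_g (g_same _ Sw) g_eq; last by rewrite -E.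
rewrite -cycdE Tb; exact: cycd_le.
Qed.

Lemma cdist_le_diam (x y : cvert n) : cdist x y <= cdiam n.
Proof.
rewrite /cdiam.
match goal with |- context [index_enum ?T] => exact: (@big2 T (@cdist m n) x y) end.
Qed.

Lemma main (u v : cvert n) (hu : ~~ inV1 u) (hv : ~~ inV1 v) (huv : u != v) :
  (tag (val u) = tag (val v) ->
     (mutually_max_distant u v <-> cdist u v = (n (tag (val u)))./2)) /\
  (tag (val u) <> tag (val v) ->
     (mutually_max_distant u v <-> cdist u v = cdiam n)).
Proof.
split => E.
- have E' : tg (val u) = tg (val v) := E.
  change (mutually_max_distant u v <-> cdist u v = h (tg (val u))).
  have cE : cdist u v = cd (n (tg (val u))) (tj (val u)) (tj (val v)) by rewrite cdist_g g_eq // E'.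
  split.
  + case=> mu _; apply/eqP; rewrite eqn_leq; apply/andP; split.
      by rewrite cE -cycdE cycd_le.
    rewrite leqNgt; apply/negP => lt.
    rewrite cE cd_sym in lt.
    have Hb : exists b, cyc_adj (val u) b /\ tg b = tg (val u) /\
        cd (n (tg (val u))) (tj (val v)) (tj b) = cd (n (tg (val u))) (tj (val v)) (tj (val u)) + 1.
      have jv := tj_lt (val v); rewrite -E' in jv.
      case: (cd_up (nE _) jv (tj_lt (val u)) lt) => H.
      + by exists (nbp (val u)); rewrite cyc_adj_sym; split; [exact: nbp_adj| split].
      + by exists (nbm (val u)); rewrite cyc_adj_sym; split; [exact: nbm_adj| split].
    case: Hb => b [Cb [Tb Cd]]; case: (mk_adj Cb) => w [Aw Sw].
    have := mu w Aw; rewrite cdist_g (g_same _ Sw) g_eq; last by rewrite Tb.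
    by rewrite Tb Cd cE cd_sym; lia.
  + move=> H; split; first exact: md_same.
    apply: md_same => //; first by rewrite cdist_sym H E'.
- split.
  + case=> mu mv.
    have Dm : cdist u v = D m.
      rewrite cdist_g; case: (ltngtP (tg (val u)) (tg (val v))) => [lt|lt|eq].
      * exact: key_lt.
      * by rewrite g_sym; apply: key_lt.
      * by exfalso; apply: E; apply: val_inj.
    apply/eqP; rewrite eqn_leq cdist_le_diam /= Dm /cdiam.
    have Hb : forall x y : cvert n, cdist x y <= D m by move=> x y; rewrite cdist_g; apply: g_le_Dm.
    match goal with |- context [index_enum ?T] => exact: (@big2le T (@cdist m n) (D m) Hb) end.
  + move=> H; split=> w Aw.
    * rewrite H; exact: cdist_le_diam.
    * rewrite [cdist v u]cdist_sym H; exact: cdist_le_diam.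
Qed.
End S.

Unset Implicit Arguments.

Theorem theorem3p3 (m : nat) (n : 'I_m -> nat)
    (hm : 2 <= m) (hn4 : forall i, 4 <= n i) (hnev : forall i, ~~ odd (n i))
    (u v : cvert n) (hu : ~~ inV1 u) (hv : ~~ inV1 v) (huv : u != v) :
  (tag (val u) = tag (val v) ->
     (mutually_max_distant u v <-> cdist u v = (n (tag (val u)))./2)) /\
  (tag (val u) <> tag (val v) ->
     (mutually_max_distant u v <-> cdist u v = cdiam n)).
Proof. exact: (main hn4 hnev hu hv huv). Qed.
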